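(* Let $\tau\ge1$ and two candidates $P,Q$. If $P$ beats $Q$ under Weighted Majority Rule 3, then $SC(P)\le\tau\,SC(Q)+2\,SC(Z)$ for every point $Z$ of the metric space.
   Context: Voters $N$ and candidates are points of an arbitrary metric space $(X,d)$; $SC(Y)=\sum_{i\in N}d(i,Y)$ for $Y\in X$. Let $A=\{i: d(i,Q)/d(i,P)\ge\tau\}$ and $B=\{j: d(j,P)/d(j,Q)\ge\tau\}$. Weighted Majority Rule 3 selects $P$ over $Q$ iff $|A|\ge|B|$ (all other voters are ignored). *)

(* Defs.v *)
From Stdlib Require Import Reals Lra List.
Open Scope R_scope.

Record is_metric (X : Type) (d : X -> X -> R) : Prop := {
  metric_nonneg : forall x y, 0 <= d x y;
  metric_refl   : forall x, d x x = 0;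
  metric_sep    : forall x y, d x y = 0 -> x = y;
  metric_sym    : forall x y, d x y = d y x;
  metric_tri    : forall x y z, d x z <= d x y + d y z
}.

(* Voters N are given as a finite list (multiset) of points of X. *)
Definition SC {X : Type} (d : X -> X -> R) (N : list X) (Y : X) : R :=
  fold_right (fun i acc => d i Y + acc) 0 N.

(* Voter i satisfies d(i,Q)/d(i,P) >= tau, written cross-multiplied:
   tau * d(i,P) <= d(i,Q). *)
Definition ratio_ge {X : Type} (d : X -> X -> R) (tau : R) (P Q i : X) : bool :=
  if Rle_dec (tau * d i P) (d i Q) then true else false.

Definition setA {X : Type} (d : X -> X -> R) (tau : R) (N : list X) (P Q : X) :=
  filter (ratio_ge d tau P Q) N.
Definition setB {X : Type} (d : X -> X -> R) (tau : R) (N : list X) (P Q : X) :=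
  filter (ratio_ge d tau Q P) N.

Definition WMR3_selects {X : Type} (d : X -> X -> R) (tau : R) (N : list X) (P Q : X) : Prop :=
  (length (setB d tau N P Q) <= length (setA d tau N P Q))%nat.

(* Main.v *)
Require Import Defs.
From Stdlib Require Import Reals Lra Lia List Bool.
Open Scope R_scope.

Definition Fsum {X : Type} (f : X -> R) (l : list X) : R :=
  fold_right (fun i acc => f i + acc) 0 l.

Lemma count_lemma {X : Type} (f : X -> R) (pa pb : X -> bool) (m : R) (l : list X) :
  0 <= m ->
  (forall x, In x l -> pa x = true -> m <= f x) ->
  (forall x, In x l -> pb x = true -> - m <= f x) ->
  (forall x, In x l -> pb x = false -> 0 <= f x) ->
  (forall x, In x l -> pa x = true -> pb x = false) ->
  m * (INR (length (filter pa l)) - INR (length (filter pb l))) <= Fsum f l.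
Proof.
  intros Hm; induction l as [|x l IH]; intros H1 H2 H3 H4.
  - simpl; lra.
  - assert (IH' := IH (fun y Hy => H1 y (or_intror Hy)) (fun y Hy => H2 y (or_intror Hy))
                  (fun y Hy => H3 y (or_intror Hy)) (fun y Hy => H4 y (or_intror Hy))).
    cbn [filter]; destruct (pa x) eqn:Ea; destruct (pb x) eqn:Eb; cbn [length]; unfold Fsum at 1; cbn [fold_right]; fold (Fsum f l).
    + rewrite (H4 x (or_introl eq_refl) Ea) in Eb; discriminate.
    + rewrite ?S_INR. specialize (H1 x (or_introl eq_refl) Ea). lra.
    + rewrite ?S_INR. specialize (H2 x (or_introl eq_refl) Eb). lra.
    + specialize (H3 x (or_introl eq_refl) Eb). lra.
Qed.

Lemma filter_split {X : Type} (a b : X -> bool) (l : list X) :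
  length (filter a l) = (length (filter (fun x => a x && b x) l) + length (filter (fun x => a x && negb (b x)) l))%nat.
Proof.
  induction l as [|x l IH]; simpl; auto.
  destruct (a x), (b x); simpl; rewrite IH; auto.
Qed.

Lemma filter_nil_all {X : Type} (a : X -> bool) (l : list X) :
  length (filter a l) = 0%nat -> forall x, In x l -> a x = false.
Proof.
  induction l as [|y l IH]; simpl; intros H x Hx; [contradiction|].
  destruct (a y) eqn:E; simpl in H; [discriminate|].
  destruct Hx as [<-|Hx]; auto.
Qed.

Lemma min_exists {X : Type} (f : X -> R) (pa : X -> bool) (l : list X) (a0 : X) :
  exists m, (m = f a0 \/ exists a, In a l /\ pa a = true /\ m = f a) /\
    m <= f a0 /\ forall x, In x l -> pa x = true -> m <= f x.
Proof.
  induction l as [|y l IH].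
  - exists (f a0). split; [left; auto|]. split; [lra|]. intros x [].
  - destruct IH as [m [Hm1 [Hm2 Hm3]]].
    destruct (pa y) eqn:E.
    + destruct (Rle_dec m (f y)).
      * exists m. split.
        { destruct Hm1 as [Hm1|[a [Ha1 Ha2]]]; [left; auto|right; exists a; simpl; auto]. }
        split; auto. intros x [<-|Hx] Hp; auto.
      * exists (f y). split; [right; exists y; simpl; auto|]. split; [lra|].
        intros x [<-|Hx] Hp; [lra|]. specialize (Hm3 x Hx Hp); lra.
    + exists m. split.
      { destruct Hm1 as [Hm1|[a [Ha1 Ha2]]]; [left; auto|right; exists a; simpl; auto]. }
      split; auto. intros x [<-|Hx] Hp; [congruence|auto].
Qed.

Theorem mainTheorem16 (X : Type) (d : X -> X -> R) (Hd : is_metric X d)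
  (N : list X) (tau : R) (Htau : 1 <= tau) (P Q : X)
  (Hwin : WMR3_selects d tau N P Q) :
  forall Z : X, SC d N P <= tau * SC d N Q + 2 * SC d N Z.
Proof.
  intros Z.
  destruct Hd as [Hnn Hrefl Hsep Hsym Htri].
  set (f := fun i => tau * d i Q + 2 * d i Z - d i P).
  assert (HF : forall l, Fsum f l = tau * SC d l Q + 2 * SC d l Z - SC d l P).
  { induction l as [|x l IH]; unfold Fsum, SC in *; simpl; [lra|].
    rewrite IH; unfold f; lra. }
  set (A := ratio_ge d tau P Q). set (B := ratio_ge d tau Q P).
  assert (HA : forall i, A i = true -> tau * d i P <= d i Q).
  { intros i; unfold A, ratio_ge; destruct Rle_dec; auto; discriminate. }
  assert (HB : forall i, B i = false -> ~ (tau * d i Q <= d i P)).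
  { intros i; unfold B, ratio_ge; destruct Rle_dec; auto; discriminate. }
  assert (HB' : forall i, B i = true -> tau * d i Q <= d i P).
  { intros i; unfold B, ratio_ge; destruct Rle_dec; auto; discriminate. }
  assert (fA : forall a, A a = true -> 0 <= f a).
  { intros a Ha. specialize (HA a Ha). unfold f.
    pose proof (Hnn a P); pose proof (Hnn a Q); pose proof (Hnn a Z).
    assert (d a P <= tau * d a P) by nra. assert (d a Q <= tau * d a Q) by nra. lra. }
  assert (pair : forall a b, A a = true -> B b = true -> 0 <= f a + f b).
  { intros a b Ha Hb. specialize (HA a Ha). specialize (HB' b Hb). unfold f.
    pose proof (Hnn a P); pose proof (Hnn a Q); pose proof (Hnn a Z).
    pose proof (Hnn b P); pose proof (Hnn b Q); pose proof (Hnn b Z).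
    assert (d a P <= tau * d a P) by nra. assert (d a Q <= tau * d a Q) by nra.
    assert (d b Q <= tau * d b Q) by nra.
    pose proof (Htri b Z P); pose proof (Htri Z a P); pose proof (Htri a Z Q);
    pose proof (Htri Z b Q). rewrite (Hsym Z a) in *. rewrite (Hsym Z b) in *. lra. }
  set (pa := fun x => A x && negb (B x)). set (pb := fun x => B x && negb (A x)).
  assert (Hcount : (length (filter pb N) <= length (filter pa N))%nat).
  { unfold WMR3_selects, setA, setB in Hwin. fold A B in Hwin.
    rewrite (filter_split A B), (filter_split B A) in Hwin.
    assert (filter (fun x => A x && B x) N = filter (fun x => B x && A x) N) as E.
    { apply filter_ext; intros; apply andb_comm. }
    rewrite E in Hwin. unfold pa, pb. lia. }
  assert (Hneut : forall x, pb x = false -> 0 <= f x).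
  { intros x Hx. unfold pb in Hx. destruct (A x) eqn:Ea; [apply fA; auto|].
    destruct (B x) eqn:Eb; [discriminate|]. specialize (HB x Eb).
    unfold f. pose proof (Hnn x Z). lra. }
  assert (Hpa : forall x, pa x = true -> A x = true /\ B x = false).
  { intros x; unfold pa; destruct (A x), (B x); simpl; intuition discriminate. }
  assert (Hpb : forall x, pb x = true -> B x = true).
  { intros x; unfold pb; destruct (A x), (B x); simpl; intuition discriminate. }
  assert (Hdis : forall x, pa x = true -> pb x = false).
  { intros x; unfold pa, pb; destruct (A x), (B x); simpl; intuition discriminate. }
  cut (0 <= Fsum f N). { rewrite HF; lra. }
  destruct (length (filter pa N)) eqn:Ela.
  - assert (length (filter pb N) = 0%nat) by lia.
    pose proof (filter_nil_all pb N H) as Hz.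
    pose proof (count_lemma f pa pb 0 N (Rle_refl 0)) as L.
    assert (0 * (INR (length (filter pa N)) - INR (length (filter pb N))) = 0) as E by ring.
    rewrite E in L. apply L.
    + intros x _ Hx. destruct (Hpa x Hx). auto.
    + intros x Hx Hp. rewrite Hz in Hp; auto; discriminate.
    + intros x _ Hx; auto.
    + intros x _ Hx; auto.
  - assert (exists a0, In a0 N /\ pa a0 = true) as [a0 [Ha0 Hpa0]].
    { assert (filter pa N <> nil) as Hne by (intro E; rewrite E in Ela; discriminate).
      destruct (filter pa N) as [|a0 r] eqn:Ef; [congruence|].
      exists a0. apply filter_In. rewrite Ef; simpl; auto. }
    destruct (min_exists f pa N a0) as [m [Hm1 [Hm2 Hm3]]].
    assert (Hma : exists a, pa a = true /\ m = f a).
    { destruct Hm1 as [Hm1|[a [_ [Ha Hm]]]]; [exists a0; auto|exists a; auto]. }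
    destruct Hma as [a [Ha Hma]].
    assert (0 <= m) by (rewrite Hma; apply fA; apply Hpa; auto).
    pose proof (count_lemma f pa pb m N H) as L.
    assert (0 <= m * (INR (length (filter pa N)) - INR (length (filter pb N)))).
    { apply Rmult_le_pos; auto. rewrite <- Ela in Hcount.
      apply le_INR in Hcount. lra. }
    eapply Rle_trans; [exact H0|]. apply L.
    + intros; auto.
    + intros x _ Hx. rewrite Hma. pose proof (pair a x (proj1 (Hpa a Ha)) (Hpb x Hx)). lra.
    + intros x _ Hx; auto.
    + intros x _ Hx; auto.
Qed.
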